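(* Let $\Delta\ge 3$ be an integer and let $G\in\mathcal{G}_\Delta$. Let $c_1,\dots,c_\Delta$ be the real numbers defined by $c_\Delta=\frac{1}{\Delta}$ and $ic_i+c_{i+1}=1$ for $i=1,\dots,\Delta-1$. Then $$\alpha(G)\ge \sum_{i=1}^{\Delta} c_i|V_i(G)|.$$
   Context: All graphs are simple, finite and undirected. For an integer $\Delta\ge 3$, $\mathcal{G}_\Delta$ denotes the set of connected graphs $G\neq K_{\Delta+1}$ with maximum degree $\Delta$. For a graph $G$ and $i\ge 1$, $V_i(G)$ is the set of vertices of $G$ of degree $i$. $\alpha(G)$ is the independence number of $G$. *)

(* Defs.v *)
From mathcomp Require Import all_boot all_order all_algebra.
Set Implicit Arguments. Unset Strict Implicit. Unset Printing Implicit Defensive.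

Section Graphs.
Variable T : finType.
Implicit Types (e : rel T) (S : {set T}).

Definition simple_graph e : Prop := symmetric e /\ irreflexive e.

Definition connected_graph e : Prop := forall x y : T, connect e x y.

Definition deg e (x : T) : nat := #|[set y | e x y]|.
Definition Vdeg e (i : nat) : {set T} := [set x | deg e x == i].

Definition max_degree e : nat := \max_(x : T) deg e x.

Definition is_complete_graph e (n : nat) : Prop :=
  #|T| = n /\ (forall x y : T, x != y -> e x y).

Definition independent e S : bool := [forall x in S, forall y in S, ~~ e x y].

Definition alpha e : nat := \max_(S : {set T} | independent e S) #|S|.
End Graphs.

(* Main.v *)
Require Import Defs.
From mathcomp Require Import all_boot all_order all_algebra.
From mathcomp Require Import zify ring lra.
Import Order.TTheory GRing.Theory Num.Theory.
Set Implicit Arguments. Unset Strict Implicit. Unset Printing Implicit Defensive.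

Section Gen.
Variable T : finType.

Definition sepc (r : rel T) (X : {set T}) : Prop :=
  forall A : {set T}, A \subset X -> A != set0 -> A != X ->
    exists p q, [/\ p \in A, q \in X :\: A & r p q].

Lemma connect_cross (r : rel T) (A : {set T}) p q :
  connect r p q -> p \in A -> q \notin A ->
  exists p' q', [/\ p' \in A, q' \notin A, r p' q' & connect r p q'].
Proof.
move=> /connectP [s]; elim: s p => [|x s IH] p /= Hp Hq pA qA.
  by rewrite Hq pA in qA.
case/andP: Hp => rpx Hpath.
case xA: (x \in A).
  have [p' [q' [H1 H2 H3 H4]]] := IH x Hpath Hq xA qA.
  exists p', q'; split => //. apply: connect_trans H4. exact: connect1.
exists p, x; split => //; first by rewrite xA. exact: connect1.
Qed.

Lemma proper_witness (A X : {set T}) : A \subset X -> A != X -> exists q, q \in X :\: A.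
Proof.
move=> sAX AX; apply/set0Pn; rewrite setD_eq0; apply: contra AX => sXA.
by rewrite eqEsubset sAX sXA.
Qed.

Lemma closure_sepc (r : rel T) x : symmetric r -> sepc r [set y | connect r x y].
Proof.
move=> rs A sAX A0 AX.
have [p pA] := set0Pn _ A0.
have [q] := proper_witness sAX AX; rewrite inE => /andP[qnA qX].
have pX : p \in [set y | connect r x y] by exact: (subsetP sAX).
rewrite inE in pX; rewrite inE in qX.
have cs : connect_sym r by apply: sym_connect_sym.
have cpq : connect r p q.
  have cpx : connect r p x by rewrite cs.
  exact: connect_trans cpx qX.
have [p' [q' [H1 H2 H3 H4]]] := connect_cross cpq pA qnA.
exists p', q'; split => //; rewrite !inE H2 /=.
exact: connect_trans pX H4.
Qed.

Lemma sepc_closure (r : rel T) X x : sepc r X -> x \in X ->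
  X \subset [set y | connect r x y].
Proof.
move=> sX xX.
set A := X :&: [set y | connect r x y].
have [AX|AX] := eqVneq A X.
  by rewrite -AX subsetIr.
have A0 : A != set0 by apply/set0Pn; exists x; rewrite !inE xX connect0.
have [p [q [pA /setDP[qX qnA] rpq]]] := sX A (subsetIl _ _) A0 AX.
move: pA; rewrite !inE => /andP[_ cxp].
by rewrite !inE qX (connect_trans cxp (connect1 rpq)) in qnA.
Qed.

Lemma sepc_mono (r r' : rel T) X : sepc r X ->
  (forall p q, p \in X -> q \in X -> r p q -> r' p q) -> sepc r' X.
Proof.
move=> sX H A sAX A0 AX.
have [p [q [pA qXA rpq]]] := sX A sAX A0 AX.
exists p, q; split => //; apply: H => //; first exact: (subsetP sAX).
by case/setDP: qXA.
Qed.

Definition degr (r : rel T) (X : {set T}) y := #|[set z in X | r y z]|.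

Lemma sepc_leaf (r : rel T) X a y0 : symmetric r -> sepc r X -> a \in X ->
  (forall z, z \in X -> r a z -> z = y0) -> sepc r (X :\ a).
Proof.
move=> rs sX aX Ha A sA A0 AX.
have sAX : A \subset X by apply: subset_trans sA (subsetDl _ _).
have anA : a \notin A by apply/negP => /(subsetP sA); rewrite !inE eqxx.
have [w] := proper_witness sA AX; rewrite !inE => /andP[wnA /andP[wa wX]].
case y0A: (y0 \in A).
  have sB : a |: A \subset X by rewrite subUset sub1set aX sAX.
  have B0 : a |: A != set0 by apply/set0Pn; exists a; rewrite !inE eqxx.
  have BX : a |: A != X.
    by apply/eqP => BX; move: wX; rewrite -BX !inE (negbTE wa) (negbTE wnA).
  have [p [q [pB /setDP[qX qnB] rpq]]] := sX _ sB B0 BX.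
  move: pB qnB; rewrite !inE => /orP[/eqP pa|pA]; rewrite negb_or => /andP[qa qnA].
    by subst p; rewrite (Ha q qX rpq) y0A in qnA.
  exists p, q; split => //; by rewrite !inE qnA qa qX.
have AX' : A != X by apply/eqP => E; move: aX; rewrite -E (negbTE anA).
have [p [q [pA /setDP[qX qnA] rpq]]] := sX _ sAX A0 AX'.
case: (eqVneq q a) => [qa|qa].
  subst q; have := Ha p (subsetP sAX _ pA); rewrite rs => /(_ rpq) py0.
  by rewrite -py0 pA in y0A.
by exists p, q; split => //; rewrite !inE qnA qa qX.
Qed.

Lemma three_leaves (r : rel T) : symmetric r -> forall X, sepc r X ->
  (forall y, y \in X -> degr r X y <= 2) -> forall a b c,
  a \in X -> b \in X -> c \in X -> a != b -> a != c -> b != c ->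
  degr r X a = 1 -> degr r X b = 1 -> degr r X c = 1 -> False.
Proof.
move=> rs X; move Hn: #|X| => n; elim: n X Hn => [|n IH] X Hn sX Hd a b c aX bX cX ab ac bc da db dc.
  by move: Hn => /eqP; rewrite cards_eq0 => /eqP X0; rewrite X0 inE in aX.
have [y0 Ey0] := cards1P (introT eqP da).
have y0N : y0 \in [set z in X | r a z] by rewrite Ey0 inE.
move: (y0N); rewrite inE => /andP[y0X ray0].
have Ha : forall z, z \in X -> r a z -> z = y0.
  by move=> z zX raz; apply/set1P; rewrite -Ey0 inE zX raz.
have aNy0 : a \in [set z in X | r y0 z] by rewrite inE aX rs.
have dy0 : 0 < degr r X y0 by rewrite /degr card_gt0; apply/set0Pn; exists a.
have [d1|d2] : degr r X y0 = 1 \/ degr r X y0 = 2.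
  move: (Hd y0 y0X) dy0; case: (degr r X y0) => [|[|[|m]]] //= _ _; by [left | right].
- have [z Ez] := cards1P (introT eqP d1).
  have za : z = a by apply/esym/set1P; rewrite -Ez.
  have Hy : forall t, t \in X -> r y0 t -> t = a.
    by move=> t tX rt; rewrite -za; apply/set1P; rewrite -Ez inE tX rt.
  set A := [set a; y0].
  have sA : A \subset X by rewrite subUset !sub1set aX y0X.
  have A0 : A != set0 by apply/set0Pn; exists a; rewrite !inE eqxx.
  have [w wX wnA] : exists2 w, w \in X & w \notin A.
    case: (eqVneq b y0) => [by0|by0].
      by exists c => //; rewrite !inE negb_or eq_sym ac -by0 eq_sym bc.
    by exists b => //; rewrite !inE negb_or eq_sym ab by0.
  have AX : A != X by apply/eqP => E; rewrite E wX in wnA.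
  have [p [q [pA /setDP[qX qnA] rpq]]] := sX _ sA A0 AX.
  move: pA qnA rpq; rewrite !inE negb_or => /orP[]/eqP -> /andP[qa qy] rpq.
    by rewrite (Ha q qX rpq) eqxx in qy.
  by rewrite (Hy q qX rpq) eqxx in qa.
- have ay0 : a != y0 by apply/eqP => E; subst y0; rewrite d2 in da.
  have by0 : b != y0 by apply/eqP => E; subst y0; rewrite db in d2.
  have cy0 : c != y0 by apply/eqP => E; subst y0; rewrite dc in d2.
  have X'n : #|X :\ a| = n by move: Hn; rewrite (cardsD1 a X) aX add1n => -[].
  have sX' := sepc_leaf rs sX aX Ha.
  have deq : forall z, z \in X -> z != y0 -> degr r (X :\ a) z = degr r X z.
    move=> z zX zy; rewrite /degr; apply: eq_card => t; rewrite !inE.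
    case: (eqVneq t a) => [->|//] /=.
    rewrite aX /=; apply/esym/negbTE; apply: contra zy; rewrite rs => /(Ha _ zX) ->.
    by [].
  apply: (IH (X :\ a) X'n sX' _ y0 b c).
  + move=> y; rewrite !inE => /andP[_ yX]; apply: leq_trans (Hd y yX).
    by apply: subset_leq_card; apply/subsetP => t; rewrite !inE => /andP[/andP[_ ->] ->].
  + by rewrite !inE eq_sym ay0.
  + by rewrite !inE eq_sym ab.
  + by rewrite !inE eq_sym ac.
  + by rewrite eq_sym.
  + by rewrite eq_sym.
  + exact: bc.
  + have : degr r X y0 = (degr r (X :\ a) y0).+1.
      rewrite /degr (cardsD1 a) aNy0 add1n; congr (_.+1); apply: eq_card => t.
      by rewrite !inE andbA.
    by rewrite d2 => -[].
  + by rewrite deq.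
  + by rewrite deq.
Qed.

End Gen.

Section Graph.
Variable T : finType.
Variable e : rel T.
Hypothesis esym : symmetric e.
Hypothesis eirr : irreflexive e.

Definition NS (S : {set T}) x := [set y in S | e x y].
Definition alphaS (S : {set T}) :=
  \max_(I : {set T} | (I \subset S) && independent e I) #|I|.

Lemma indepP (I : {set T}) :
  reflect (forall x y, x \in I -> y \in I -> ~~ e x y) (independent e I).
Proof.
apply: (iffP forall_inP) => [H x y xI yI|H x xI].
  by move/forall_inP: (H x xI) => /(_ y yI).
by apply/forall_inP => y yI; apply: H.
Qed.

Lemma alphaS_ge (S I : {set T}) : I \subset S -> independent e I -> #|I| <= alphaS S.
Proof. by move=> sIS iI; apply: (@leq_bigmax_cond _ (fun J : {set T} => (J \subset S) && independent e J) (fun J => #|J|) I); rewrite sIS iI. Qed.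

Lemma alphaS_ex (S : {set T}) : exists I : {set T}, [/\ I \subset S, independent e I & #|I| = alphaS S].
Proof.
have H0 : (set0 \subset S) && independent e set0.
  by rewrite sub0set; apply/indepP => x y; rewrite inE.
have : 0 < #|[pred J : {set T} | (J \subset S) && independent e J]|.
  by apply/card_gt0P; exists set0.
move=> /(eq_bigmax_cond (fun J : {set T} => #|J|)) [I].
rewrite inE => /andP[H1 H2] H3.
by exists I; split.
Qed.

Definition low (S : {set T}) d := forall A : {set T}, A \subset S -> A != set0 ->
  (forall x y, x \in A -> y \in S -> e x y -> y \in A) ->
  exists2 x, x \in A & #|NS S x| < d.

Definition proper_col d (S : {set T}) (col : T -> 'I_d) :=
  forall x y, x \in S -> y \in S -> e x y -> col x != col y.

Lemma NS_sub (S S' : {set T}) y : S' \subset S -> NS S' y \subset NS S y.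
Proof.
move=> sS; apply/subsetP => t; rewrite !inE => /andP[tS ->].
by rewrite (subsetP sS _ tS).
Qed.

Lemma colorA d : 0 < d -> forall S : {set T},
  (forall x, x \in S -> #|NS S x| <= d) -> low S d ->
  exists col : T -> 'I_d, proper_col S col.
Proof.
move=> d0 S; have [n Hn] := ubnP #|S|; elim: n S Hn => // n IH S Hn Hdeg Hlow.
case: (eqVneq S set0) => [->|S0].
  by exists (fun _ => Ordinal d0) => x y; rewrite inE.
have [x xS dx] := Hlow S (subxx S) S0 (fun x y _ yS _ => yS).
set S' := S :\ x.
have sS' : S' \subset S by apply: subsetDl.
have Hn' : #|S'| < n by move: Hn; rewrite (cardsD1 x S) xS add1n.
have [col' Hcol'] : exists col' : T -> 'I_d, proper_col S' col'.
  apply: IH Hn' _ _.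
  - move=> y; rewrite !inE => /andP[_ yS].
    exact: leq_trans (subset_leq_card (NS_sub y sS')) (Hdeg y yS).
  - move=> A sA A0 Acl.
    have sAS : A \subset S by apply: subset_trans sA sS'.
    case Hc: [forall a in A, forall y, (y \in S) ==> e a y ==> (y \in A)].
      have Acl' : forall a y, a \in A -> y \in S -> e a y -> y \in A.
        move=> a y aA yS eay; move/forall_inP: Hc => /(_ a aA)/forallP/(_ y).
        by rewrite yS eay.
      have [z zA dz] := Hlow A sAS A0 Acl'.
      by exists z => //; exact: leq_ltn_trans (subset_leq_card (NS_sub z sS')) dz.
    move/negbT: Hc; rewrite negb_forall_in => /existsP[a /andP[aA]].
    rewrite negb_forall => /existsP[y]; rewrite !negb_imply => /andP[yS /andP[eay ynA]].
    exists a => //.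
    have yx : y = x.
      apply/eqP; apply: contraNT ynA => yx; apply: Acl aA _ eay.
      by rewrite !inE yx yS.
    have : NS S' a \proper NS S a.
      rewrite properE NS_sub //=; apply/subsetPn; exists y.
        by rewrite !inE yS eay.
      by rewrite !inE yx eqxx.
    move/proper_card => H; apply: leq_trans H _; apply: Hdeg; exact: (subsetP sAS).
have [k Hk] : exists k, k \notin [set col' y | y in NS S' x].
  case: (boolP [exists k, k \notin [set col' y | y in NS S' x]]) => [/existsP//|].
  rewrite negb_exists => /forallP Hall.
  have : #|[set: 'I_d]| <= #|NS S' x|.
    apply: leq_trans (leq_imset_card col' _); apply: subset_leq_card.
    by apply/subsetP => k _; have := Hall k; rewrite negbK.
  rewrite cardsT card_ord => H.
  by have := leq_trans H (subset_leq_card (NS_sub x sS')); rewrite leqNgt dx.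
exists (fun y => if y == x then k else col' y) => y z yS zS eyz.
case: (eqVneq y x) => [yx|yx]; case: (eqVneq z x) => [zx|zx].
- by subst; rewrite eirr in eyz.
- apply: contra Hk => /eqP ->; apply/imsetP; exists z => //.
  by rewrite !inE zx zS -yx eyz.
- apply: contra Hk => /eqP <-; apply/imsetP; exists y => //.
  by rewrite !inE yx yS -zx esym eyz.
- by apply: Hcol' => //; rewrite !inE ?yx ?zx ?yS ?zS.
Qed.

Lemma card_classes d (col : T -> 'I_d) (S : {set T}) :
  #|S| = \sum_(k < d) #|[set x in S | col x == k]|.
Proof.
rewrite -sum1_card (partition_big col predT) //=.
apply: eq_bigr => k _; rewrite -sum1_card; apply: eq_bigl => x; by rewrite inE.
Qed.

Lemma class_indep d (col : T -> 'I_d) (S : {set T}) k :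
  proper_col S col -> independent e [set x in S | col x == k].
Proof.
move=> Hc; apply/indepP => x y; rewrite !inE => /andP[xS /eqP xk] /andP[yS /eqP yk].
by apply/negP => exy; move: (Hc x y xS yS exy); rewrite xk yk eqxx.
Qed.

Lemma color_bound d (col : T -> 'I_d) (S S' : {set T}) :
  proper_col S col -> S \subset S' -> #|S| <= d * alphaS S'.
Proof.
move=> Hc sS; rewrite (card_classes col).
have -> : d * alphaS S' = \sum_(k < d) alphaS S'.
  by rewrite sum_nat_const card_ord.
apply: leq_sum => k _; apply: alphaS_ge; last exact: class_indep.
by apply: subset_trans sS; apply/subsetP => x; rewrite inE => /andP[].
Qed.

End Graph.

Section Num.
Local Open Scope ring_scope.
Variable R : realFieldType.
Variable D : nat.
Variable c : nat -> R.
Hypothesis D3 : (3 <= D)%N.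
Hypothesis cD : c D = (D%:R)^-1.
Hypothesis crec : forall i : nat, (1 <= i <= D - 1)%N -> i%:R * c i + c i.+1 = 1.

Definition wt (i : nat) : R := if i == 0%N then 1 else c i.

Lemma c_bounds k : forall i, (1 <= i)%N -> (i + k = D)%N ->
  1 <= (i%:R + 1) * c i /\ i%:R * c i <= 1.
Proof.
elim: k => [|k IH] i i1 iD.
  rewrite addn0 in iD; subst i.
  have D0 : (D%:R : R) != 0 by rewrite pnatr_eq0 -lt0n; apply: leq_trans D3.
  rewrite cD mulfV // mulrDl mulfV // mul1r; split => //.
  by rewrite lerDl invr_ge0 ler0n.
have iD' : (i.+1 + k = D)%N by rewrite addSnnS.
have := IH i.+1 (leqW i1) iD'.
rewrite -natr1 => -[H1 H2].
have iD1 : (1 <= i <= D - 1)%N.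
  by move: i1 iD; clear; lia.
have Hr := crec iD1.
have I1 : (1 : R) <= i%:R by rewrite ler1n.
split; last by nra.
nra.
Qed.

Lemma c_props i : (1 <= i <= D)%N ->
  [/\ 1 <= (i%:R + 1) * c i, i%:R * c i <= 1, 0 <= c i & c i <= 1].
Proof.
case/andP=> i1 iD.
have [H1 H2] := @c_bounds (D - i)%N i i1 (subnKC iD).
have I1 : (1 : R) <= i%:R by rewrite ler1n.
split => //; nra.
Qed.

Lemma c_mono i : (1 <= i)%N -> (i < D)%N -> c i.+1 <= c i.
Proof.
move=> i1 iD.
have [H1 _ _ _] := c_props (i := i) ltac:(by rewrite i1 ltnW).
have [_ H2 _ _] := c_props (i := i.+1) ltac:(by rewrite iD).
have I1 : (1 : R) <= i%:R by rewrite ler1n.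
move: H2; rewrite -natr1 => H2.
nra.
Qed.

Lemma wt_step j : (j < D)%N -> wt j.+1 <= wt j.
Proof.
move=> jD; rewrite /wt /=; case: (eqVneq j 0%N) => [->|j0].
  by have [] := c_props (i := 1) ltac:(by rewrite /= ltnW // ltnW).
by apply: c_mono; rewrite // lt0n.
Qed.

Lemma wt_mono i j : (i <= j)%N -> (j <= D)%N -> wt j <= wt i.
Proof.
move=> ij; elim: j ij => [|j IH] ij jD.
  by rewrite leqn0 in ij; rewrite (eqP ij).
case: (eqVneq i j.+1) => [->//|ij'].
have ij2 : (i <= j)%N by rewrite -ltnS ltn_neqAle ij' ij.
exact: le_trans (wt_step jD) (IH ij2 (ltnW jD)).
Qed.

Lemma wt_ge0 i : (i <= D)%N -> 0 <= wt i.
Proof.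
rewrite /wt; case: (eqVneq i 0%N) => // i0 iD.
by have [] := c_props (i := i) ltac:(by rewrite lt0n i0).
Qed.

Lemma wt_le1 i : (i <= D)%N -> wt i <= 1.
Proof. by move=> iD; apply: (wt_mono (leq0n i) iD). Qed.

Lemma wt_clique m : (1 <= m <= D)%N -> (m.-1)%:R * wt m.-1 + wt m <= 1.
Proof.
case: m => // m /andP[_ mD] /=.
case: m mD => [|m] mD.
  by rewrite mul0r add0r; apply: wt_le1.
rewrite /wt /=; rewrite crec //.
by move: mD; clear; lia.
Qed.

Lemma c_reg d : (1 <= d)%N -> (d <= D - 1)%N -> (2 * d + 1)%:R * c d <= 2.
Proof.
move=> d1 dD.
have Hr := crec (i := d) ltac:(by rewrite d1 dD).
have [H1 _ H3 _] := c_props (i := d.+1) (ltac:(move: dD d1; clear; lia)).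
have I1 : (1 : R) <= d%:R by rewrite ler1n.
move: H1; rewrite -natr1 => H1.
rewrite natrD natrM.
nra.
Qed.

Lemma c_reg2 d (a n : nat) : (1 <= d)%N -> (d <= D - 1)%N -> (2 <= a)%N ->
  (n <= d * a + 1)%N -> n%:R * c d <= a%:R.
Proof.
move=> d1 dD a2 na.
have H := c_reg d1 dD.
have [_ _ H3 _] := c_props (i := d) (ltac:(move: dD d1; clear; lia)).
have Hn : (n%:R : R) <= d%:R * a%:R + 1 by rewrite -natrM natr1 ler_nat -addn1.
have A2 : (2 : R) <= a%:R by rewrite (ler_nat R 2 a).
move: H; rewrite natrD natrM => H.
nra.
Qed.

End Num.

Section Low.
Variable T : finType.
Variable e : rel T.
Hypothesis esym : symmetric e.
Hypothesis eirr : irreflexive e.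

Lemma low_del (S : {set T}) d v : sepc e S -> (forall x, x \in S -> #|NS e S x| <= d) ->
  v \in S -> low e (S :\ v) d.
Proof.
move=> Sc Hd vS A sA A0 Acl.
have sAS : A \subset S by apply: subset_trans sA (subsetDl _ _).
have AS : A != S.
  by apply/eqP => E; have := subsetP sA v; rewrite E vS !inE eqxx => /(_ isT).
have [p [q [pA /setDP[qS qnA] epq]]] := Sc A sAS A0 AS.
exists p => //.
have qv : q = v.
  apply/eqP; apply: contraNT qnA => qv; apply: Acl pA _ epq.
  by rewrite !inE qv qS.
have : NS e (S :\ v) p \proper NS e S p.
  rewrite properE NS_sub ?subsetDl //=; apply/subsetPn; exists q.
    by rewrite !inE qS epq.
  by rewrite !inE qv eqxx.
move/proper_card => H; apply: leq_trans H _; apply: Hd; exact: (subsetP sAS).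
Qed.

End Low.

Section Kempe.
Variable T : finType.
Variable e : rel T.
Hypothesis esym : symmetric e.
Hypothesis eirr : irreflexive e.
Variable S : {set T}.
Variable d : nat.
Hypothesis Sreg : forall x, x \in S -> #|NS e S x| = d.
Variable v : T.
Hypothesis vS : v \in S.
Hypothesis tight : d * alphaS e S < #|S|.

Local Notation U := (S :\ v).
Local Notation cls col k := [set x in S :\ v | col x == k].

Lemma sumC1 (t : 'I_d -> nat) k0 :
  \sum_(k < d) t k = t k0 + \sum_(k < d | k != k0) t k.
Proof. by rewrite (bigD1 k0). Qed.

Lemma tight_cls (col : T -> 'I_d) k : proper_col e U col -> alphaS e S <= #|cls col k|.
Proof.
move=> Hc.
have HU : #|U| = #|S| - 1 by rewrite (cardsD1 v S) vS add1n subSS subn0.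
have H := card_classes col U.
rewrite (sumC1 _ k) in H.
have Hle : \sum_(j < d | j != k) #|cls col j| <= \sum_(j < d | j != k) alphaS e S.
  apply: leq_sum => j _; apply: alphaS_ge; last exact: class_indep.
  by apply/subsetP => x; rewrite !inE => /andP[/andP[]].
rewrite sum_nat_const in Hle.
have Hc1 : #|[pred j : 'I_d | j != k]| = d.-1 by rewrite cardC1 card_ord.
rewrite Hc1 in Hle.
have d0 : 0 < d := leq_ltn_trans (leq0n k) (ltn_ord k).
move: tight HU H Hle; set a := alphaS e S; set n := #|S|; set m := #|cls col k|.
set s := \sum_(_ < _ | _) _.
move=> t1 HU H Hle; rewrite leqNgt; apply/negP => ma.
move: t1 HU H Hle ma d0; clear; nia.
Qed.

Lemma F_add (col : T -> 'I_d) k x : proper_col e U col -> x \in S -> x \notin cls col k ->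
  (forall y, y \in cls col k -> ~~ e x y) -> False.
Proof.
move=> Hc xS xn Hn.
have H1 := tight_cls k Hc.
have Hi : independent e (x |: cls col k).
  apply/indepP => a b; rewrite !inE => /orP[/eqP->|aC] /orP[/eqP->|bC].
  - by rewrite eirr.
  - by apply: Hn; rewrite !inE.
  - by rewrite esym; apply: Hn; rewrite !inE.
  - by move/indepP: (class_indep k Hc); apply; rewrite !inE.
have sS : x |: cls col k \subset S.
  by apply/subsetP => y; rewrite !inE => /orP[/eqP->//|/andP[/andP[]]].
have := alphaS_ge sS Hi; rewrite cardsU1 xn add1n => H2.
by have := leq_ltn_trans H1 H2; rewrite ltnn.
Qed.

Lemma NvU : NS e S v \subset U.
Proof.
apply/subsetP => y; rewrite !inE => /andP[yS evy]; rewrite yS andbT.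
by apply: contraTneq evy => ->; rewrite eirr.
Qed.

Lemma F1 (col : T -> 'I_d) k : proper_col e U col -> exists2 y, y \in NS e S v & col y = k.
Proof.
move=> Hc; case: (boolP [exists y in NS e S v, col y == k]).
  by move=> /exists_inP[y yN /eqP]; exists y.
rewrite negb_exists_in => /forall_inP Hn; exfalso.
apply: (F_add (k := k) (x := v) Hc vS); first by rewrite !inE eqxx.
move=> y; rewrite !inE => /andP[/andP[yv yS] yk]; apply/negP => evy.
by have := Hn y; rewrite !inE yS evy yk => /(_ isT).
Qed.

Lemma F2 (col : T -> 'I_d) x k : proper_col e U col -> x \in U -> k != col x ->
  exists2 y, y \in NS e U x & col y = k.
Proof.
move=> Hc xU kx; case: (boolP [exists y in NS e U x, col y == k]).
  by move=> /exists_inP[y yN /eqP]; exists y.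
rewrite negb_exists_in => /forall_inP Hn; exfalso.
have xS : x \in S by move: xU; rewrite !inE => /andP[].
apply: (F_add (k := k) (x := x) Hc xS); first by rewrite !inE [col x == k]eq_sym (negbTE kx) andbF.
move=> y; rewrite !inE => /andP[/andP[yv yS] yk]; apply/negP => exy.
by have := Hn y; rewrite !inE yv yS exy yk => /(_ isT).
Qed.

Lemma S1 (col : T -> 'I_d) y z : proper_col e U col -> y \in NS e S v -> z \in NS e S v ->
  col y = col z -> y = z.
Proof.
move=> Hc yN zN Hyz.
have : {in NS e S v &, injective col}.
  apply/imset_injP; rewrite (Sreg vS) eqn_leq; apply/andP; split.
    by apply: leq_trans (leq_imset_card _ _) _; rewrite (Sreg vS).
  rewrite -[X in X <= _](card_ord d) -cardsT; apply: subset_leq_card.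
  apply/subsetP => k _; have [w wN <-] := F1 k Hc; exact: imset_f.
by move/(_ y z yN zN Hyz).
Qed.


Lemma NSU_eq x : NS e U x = NS e S x :\ v.
Proof. by apply/setP => y; rewrite !inE; case: (y == v); rewrite ?andbF. Qed.

Lemma deg_U x : x \in S -> #|NS e U x| + (x \in NS e S v) = d.
Proof.
move=> xS; rewrite NSU_eq.
have -> : (x \in NS e S v) = (v \in NS e S x) by rewrite !inE xS vS esym.
by rewrite addnC -cardsD1 Sreg.
Qed.

Definition tk (col : T -> 'I_d) x k := #|[set y in NS e U x | col y == k]|.

Lemma tk_sum (col : T -> 'I_d) x : \sum_(k < d) tk col x k = #|NS e U x|.
Proof. by rewrite (card_classes col (NS e U x)). Qed.

Lemma tk_col (col : T -> 'I_d) x : proper_col e U col -> x \in U -> tk col x (col x) = 0.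
Proof.
move=> Hc xU; apply/eqP; rewrite cards_eq0; apply/eqP/setP => y; rewrite !inE.
apply/negP => /andP[/andP[yU exy] /eqP cy].
have yU' : y \in U by rewrite !inE.
by have := Hc x y xU yU' exy; rewrite cy eqxx.
Qed.

Lemma tk_pos (col : T -> 'I_d) x k : proper_col e U col -> x \in U -> k != col x -> 0 < tk col x k.
Proof.
move=> Hc xU kx; have [y yN cy] := F2 Hc xU kx.
by rewrite card_gt0; apply/set0Pn; exists y; rewrite inE yN cy eqxx.
Qed.

Lemma sum_lb (t : 'I_d -> nat) k0 k1 k2 : k1 != k2 -> t k0 = 0 ->
  (forall k, k != k0 -> 0 < t k) ->
  d.-1 + (t k1).-1 + (t k2).-1 <= \sum_(k < d) t k.
Proof.
move=> k12 t0 tpos.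
have Hpt : forall k, (k != k0) + (k == k1) * (t k1).-1 + (k == k2) * (t k2).-1 <= t k.
  move=> k; case: (eqVneq k k1) => [->|kk1].
    rewrite ?eqxx (negbTE k12) mul1n mul0n addn0.
    case: (eqVneq k1 k0) => [->|k10]; first by rewrite t0.
    by rewrite add1n prednK // tpos.
  case: (eqVneq k k2) => [->|kk2].
    rewrite ?eqxx /= ?mul1n ?mul0n ?addn0 ?add0n.
    case: (eqVneq k2 k0) => [->|k20]; first by rewrite t0.
    by rewrite add1n prednK // tpos.
  rewrite /= ?mul0n ?addn0.
  case: (eqVneq k k0) => //= kk0; exact: tpos.
have E1 : \sum_(k < d) (k != k0 : nat) = d.-1.
  rewrite (bigD1 k0) //= eqxx add0n.
  rewrite (eq_bigr (fun _ => 1)); last by move=> k /negbTE ->.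
  by rewrite sum_nat_const cardC1 card_ord muln1.
have E2 : forall k' c, \sum_(k < d) ((k == k') * c) = c.
  move=> k' c; rewrite (bigD1 k') //= eqxx mul1n big1 ?addn0 //.
  by move=> k /negbTE ->.
have H : \sum_(k < d) ((k != k0) + (k == k1) * (t k1).-1 + (k == k2) * (t k2).-1)
   <= \sum_(k < d) t k by apply: leq_sum => k _; exact: Hpt.
apply: leq_trans H; rewrite !big_split /=.
by rewrite E1 !E2.
Qed.

Lemma Ct (col : T -> 'I_d) x k1 k2 : proper_col e U col -> x \in U -> k1 != k2 ->
  (tk col x k1).-1 + (tk col x k2).-1 + (x \in NS e S v) <= 1.
Proof.
move=> Hc xU k12.
have xS : x \in S by move: xU; rewrite !inE => /andP[].
have := sum_lb (t := tk col x) k12 (tk_col Hc xU) (fun k kx => tk_pos Hc xU kx).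
rewrite tk_sum => H; have := deg_U xS.
have d0 : 0 < d := leq_ltn_trans (leq0n k1) (ltn_ord k1).
move: H; clear; lia.
Qed.

Lemma Ct1 (col : T -> 'I_d) x k : proper_col e U col -> x \in U -> (2 < d)%N -> tk col x k <= 2.
Proof.
move=> Hc xU d2.
have [k' kk'] : exists k' : 'I_d, k != k'.
  case: (eqVneq k (Ordinal (ltnW d2))) => [->|]; last by eexists; eauto.
  have d1 : 1 < d by apply: ltnW.
  by exists (Ordinal (ltnW d1)); rewrite -val_eqE /=.
have := Ct Hc xU kk'; clear; lia.
Qed.

Lemma Ct3 (col : T -> 'I_d) x k : proper_col e U col -> x \in NS e S v -> (2 < d)%N -> tk col x k <= 1.
Proof.
move=> Hc xN d2.
have xU : x \in U by apply: (subsetP NvU).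
have [k' kk'] : exists k' : 'I_d, k != k'.
  case: (eqVneq k (Ordinal (ltnW d2))) => [->|]; last by eexists; eauto.
  have d1 : 1 < d by apply: ltnW.
  by exists (Ordinal (ltnW d1)); rewrite -val_eqE /=.
have := Ct Hc xU kk'; rewrite xN; clear; lia.
Qed.

Lemma Ct2 (col : T -> 'I_d) x k1 k2 : proper_col e U col -> x \in U -> k1 != k2 ->
  2 <= tk col x k1 -> 2 <= tk col x k2 -> False.
Proof. move=> Hc xU k12 H1 H2; have := Ct Hc xU k12; move: H1 H2; clear; lia. Qed.


Definition Hk (col : T -> 'I_d) i j : rel T :=
  [rel x y | [&& x \in U, y \in U, (col x == i) || (col x == j),
                (col y == i) || (col y == j) & e x y]].

Lemma Hk_sym col i j : symmetric (Hk col i j).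
Proof.
move=> x y; apply/idP/idP => /and5P[h1 h2 h3 h4 h5]; apply/and5P; split => //;
  by rewrite esym.
Qed.

Lemma Hk_ij col i j x y : Hk col i j x y = Hk col j i x y.
Proof. by rewrite /Hk /= [(col x == i) || _]orbC [(col y == i) || _]orbC. Qed.

Definition Kc col i j p := [set y | connect (Hk col i j) p y].

Lemma Kc_p col i j p : p \in Kc col i j p.
Proof. by rewrite inE connect0. Qed.

Lemma Kc_mem col i j p y : y \in Kc col i j p -> y != p ->
  (y \in U) && ((col y == i) || (col y == j)).
Proof.
rewrite inE (sym_connect_sym (@Hk_sym col i j)) => /connectP[[|z s] /=].
  by move=> _ -> ; rewrite eqxx.
by case/andP => /and5P[h1 h2 h3 h4 h5] _ _ _; rewrite h1 h3.
Qed.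

Lemma Kc_memU col i j p y : p \in U -> col p = i -> y \in Kc col i j p ->
  (y \in U) && ((col y == i) || (col y == j)).
Proof.
move=> pU cp yK; case: (eqVneq y p) => [->|yp]; first by rewrite pU cp eqxx.
exact: Kc_mem yK yp.
Qed.

Lemma Kc_closed col i j p y z : y \in Kc col i j p -> Hk col i j y z -> z \in Kc col i j p.
Proof. by rewrite !inE => cy Hyz; exact: connect_trans cy (connect1 Hyz). Qed.

Definition swc (i j c : 'I_d) := if c == i then j else if c == j then i else c.
Definition sw (col : T -> 'I_d) i j (D : {set T}) x :=
  if x \in D then swc i j (col x) else col x.

Lemma swc_inv i j c : swc i j (swc i j c) = c.
Proof.
rewrite /swc.
case E1: (c == i); case E2: (c == j); case E3: (j == i); rewrite ?eqxx ?E1 ?E2 ?E3 //=;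
  move/eqP: E1; move/eqP: E2; move/eqP: E3 => E3 E2 E1; subst => //; rewrite ?eqxx //.
all: try by move/eqP: E3 => /negbTE ->; rewrite ?eqxx.
all: try (rewrite eq_sym E3).
Qed.

Lemma swc_in i j c : (c == i) || (c == j) -> (swc i j c == i) || (swc i j c == j).
Proof.
rewrite /swc; case: (eqVneq c i) => [_|ci] /=; first by rewrite eqxx orbT.
by move=> ->; rewrite eqxx.
Qed.

Lemma swc_out i j c : ~~ ((c == i) || (c == j)) -> swc i j c = c.
Proof. by rewrite /swc negb_or => /andP[/negbTE -> /negbTE ->]. Qed.

Lemma swap_proper (col : T -> 'I_d) (i j : 'I_d) (D : {set T}) : proper_col e U col -> D \subset U ->
  (forall x, x \in D -> (col x == i) || (col x == j)) ->
  (forall x y, x \in D -> y \in U -> e x y -> (col y == i) || (col y == j) -> y \in D) ->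
  proper_col e U (sw col i j D).
Proof.
move=> Hc sD Dc Dcl.
have key : forall x y, x \in D -> y \notin D -> x \in U -> y \in U -> e x y ->
    swc i j (col x) != col y.
  move=> x y xD yD xU yU exy.
  have Hy : ~~ ((col y == i) || (col y == j)).
    by apply: contra yD => H; apply: Dcl xD yU exy H.
  have Hx := swc_in (Dc x xD).
  apply: contra Hy => /eqP <-; exact: Hx.
move=> x y xU yU exy; rewrite /sw.
case xD: (x \in D); case yD: (y \in D).
- by rewrite (can_eq (@swc_inv i j)); apply: Hc.
- by apply: key => //; rewrite yD.
- rewrite eq_sym; apply: key => //; first by rewrite xD.
  by rewrite esym.
- exact: Hc.
Qed.

Lemma Kc_swap_proper col i j p : proper_col e U col -> p \in U -> col p = i ->
  proper_col e U (sw col i j (Kc col i j p)).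
Proof.
move=> Hc pU cp; apply: swap_proper => //.
- by apply/subsetP => y yK; case/andP: (Kc_memU pU cp yK).
- by move=> y yK; case/andP: (Kc_memU pU cp yK).
- move=> x y xK yU exy cy; case/andP: (Kc_memU pU cp xK) => xU cx.
  by apply: Kc_closed xK _; rewrite /Hk /= xU yU cx cy exy.
Qed.

Lemma sw_out (col : T -> 'I_d) (i j : 'I_d) (D : {set T}) y : ~~ ((col y == i) || (col y == j)) -> sw col i j D y = col y.
Proof. by move=> H; rewrite /sw swc_out //; case: (y \in D). Qed.

Lemma NvU' y : y \in NS e S v -> y \in U.
Proof. exact: (subsetP NvU). Qed.

Lemma kempe_conn col p q : proper_col e U col -> p \in NS e S v -> q \in NS e S v ->
  col p != col q -> q \in Kc col (col p) (col q) p.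
Proof.
move=> Hc pN qN pq; apply: contraT => qn.
have pU := NvU' pN.
have Hc' : proper_col e U (sw col (col p) (col q) (Kc col (col p) (col q) p)).
  by apply: Kc_swap_proper.
have [y yN cy] := F1 (col p) Hc'.
move: cy; rewrite /sw; case yD: (y \in Kc col (col p) (col q) p) => cy.
  have := Kc_memU pU (erefl _) yD; case/andP => _ /orP[]/eqP cyi.
    by move: cy; rewrite cyi /swc eqxx => /eqP; rewrite eq_sym (negbTE pq).
  have yq : y = q by apply: (S1 Hc yN qN).
  by move: yD; rewrite yq (negbTE qn).
have yp : y = p by apply: (S1 Hc yN pN).
by move: yD; rewrite yp Kc_p.
Qed.

Lemma hk_tk col i j y : proper_col e U col -> y \in U -> col y = i ->
  #|[set z | Hk col i j y z]| = tk col y j.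
Proof.
move=> Hc yU cy.
apply: eq_card => z; rewrite /tk /Hk !inE /= yU cy eqxx /=.
case: (boolP (z \in U)) => zU.
  have zU' := zU; move: zU'; rewrite !inE => ->.
  case: (boolP (e y z)) => eyz; rewrite ?andbF ?andbT //=.
  by have := Hc y z yU zU eyz; rewrite cy eq_sym => /negbTE ->.
by move: zU; rewrite !inE => /negbTE ->.
Qed.

Lemma degK col i j p y : y \in Kc col i j p ->
  degr (Hk col i j) (Kc col i j p) y = #|[set z | Hk col i j y z]|.
Proof.
move=> yK; apply: eq_card => z; rewrite !inE.
case H: (Hk col i j y z); rewrite ?andbF ?andbT //.
by have := Kc_closed yK H; rewrite inE.
Qed.

Hypothesis d3 : (2 < d)%N.

Lemma deg_le2 col i j p y : proper_col e U col -> p \in U -> col p = i -> i != j ->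
  y \in Kc col i j p -> #|[set z | Hk col i j y z]| <= 2.
Proof.
move=> Hc pU cp ij yK; case/andP: (Kc_memU pU cp yK) => yU /orP[]/eqP cy.
  by rewrite hk_tk //; apply: Ct1.
rewrite (eq_card (B := [set z | Hk col j i y z])); last by move=> z; rewrite !inE Hk_ij.
by rewrite hk_tk //; apply: Ct1.
Qed.

Lemma deg_pos col i j p y : proper_col e U col -> p \in U -> col p = i -> i != j ->
  y \in Kc col i j p -> 0 < #|[set z | Hk col i j y z]|.
Proof.
move=> Hc pU cp ij yK; case/andP: (Kc_memU pU cp yK) => yU /orP[]/eqP cy.
  by rewrite hk_tk //; apply: tk_pos => //; rewrite cy eq_sym.
rewrite (eq_card (B := [set z | Hk col j i y z])); last by move=> z; rewrite !inE Hk_ij.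
by rewrite hk_tk //; apply: tk_pos => //; rewrite cy.
Qed.

Lemma deg_N col i j p y : proper_col e U col -> p \in U -> col p = i -> i != j ->
  y \in Kc col i j p -> y \in NS e S v -> #|[set z | Hk col i j y z]| = 1.
Proof.
move=> Hc pU cp ij yK yN.
have H1 := deg_pos Hc pU cp ij yK.
suff : #|[set z | Hk col i j y z]| <= 1 by move: H1; clear; lia.
case/andP: (Kc_memU pU cp yK) => yU /orP[]/eqP cy.
  by rewrite hk_tk //; apply: Ct3.
rewrite (eq_card (B := [set z | Hk col j i y z])); last by move=> z; rewrite !inE Hk_ij.
by rewrite hk_tk //; apply: Ct3.
Qed.

Lemma kempe_path col p q x : proper_col e U col -> p \in NS e S v -> q \in NS e S v ->
  col p != col q -> x \in Kc col (col p) (col q) p -> x != p -> x != q ->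
  2 <= #|[set z | Hk col (col p) (col q) x z]|.
Proof.
move=> Hc pN qN pq xK xp xq.
have pU := NvU' pN.
have qK := kempe_conn Hc pN qN pq.
rewrite leqNgt; apply/negP => H.
have H1 := deg_pos Hc pU (erefl _) pq xK.
have Hx : #|[set z | Hk col (col p) (col q) x z]| = 1 by move: H H1; clear; lia.
have Hs := @Hk_sym col (col p) (col q).
have sK : sepc (Hk col (col p) (col q)) (Kc col (col p) (col q) p) := closure_sepc (x := p) Hs.
apply: (three_leaves Hs sK _ (Kc_p col (col p) (col q) p) qK xK).
- by move=> y yK; rewrite degK //; exact: (deg_le2 (p := p) Hc pU (erefl _) pq yK).
- apply: contra pq => /eqP pq'; by rewrite pq'.
- by rewrite eq_sym.
- by rewrite eq_sym.
- by rewrite degK ?Kc_p //; exact: (deg_N (p := p) Hc pU (erefl _) pq (Kc_p _ _ _ _) pN).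
- by rewrite degK //; exact: (deg_N (p := p) Hc pU (erefl _) pq qK qN).
- by rewrite degK.
Qed.


Lemma kempe_cross (col : T -> 'I_d) p q r x : proper_col e U col ->
  p \in NS e S v -> q \in NS e S v -> r \in NS e S v ->
  col p != col q -> col p != col r -> col q != col r ->
  x \in Kc col (col p) (col q) p -> x \in Kc col (col p) (col r) p -> x != p -> False.
Proof.
move=> Hc pN qN rN pq pr qr xK1 xK2 xp.
have pU := NvU' pN.
have /andP[xU cx1] := Kc_memU pU (erefl _) xK1.
have /andP[_ cx2] := Kc_memU pU (erefl _) xK2.
have cxp : col x = col p.
  move: cx1 cx2 => /orP[/eqP //|/eqP cxq] /orP[/eqP //|/eqP cxr].
  by move: qr; rewrite -cxq -cxr eqxx.
have xq : x != q by apply: contra pq => /eqP <-; rewrite cxp.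
have xr : x != r by apply: contra pr => /eqP <-; rewrite cxp.
have H1 := kempe_path Hc pN qN pq xK1 xp xq.
have H2 := kempe_path Hc pN rN pr xK2 xp xr.
rewrite hk_tk // in H1; rewrite hk_tk // in H2.
exact: Ct2 Hc xU qr H1 H2.
Qed.

Lemma kempe_final (col : T -> 'I_d) v1 v2 : proper_col e U col -> v1 \in NS e S v -> v2 \in NS e S v ->
  v1 != v2 -> ~~ e v1 v2 -> False.
Proof.
move=> Hc v1N v2N v12 ne12.
have v1U := NvU' v1N.
have ab : col v1 != col v2.
  by apply: contra v12 => /eqP H; apply/eqP; exact: S1 Hc v1N v2N H.
have [c ca cb] : exists2 c : 'I_d, c != col v1 & c != col v2.
  have H := cardsC [set col v1; col v2]; rewrite cards2 ab card_ord in H.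
  have : 0 < #|~: [set col v1; col v2]| by move: H d3; clear; lia.
  case/card_gt0P => k; rewrite !inE negb_or => /andP[k1 k2].
  by exists k.
have [v3 v3N cv3] := F1 c Hc.
have v3a : col v1 != col v3 by rewrite cv3 eq_sym.
have v3b : col v2 != col v3 by rewrite cv3 eq_sym.
have [u uN cu] := F2 (k := col v2) Hc v1U (ltac:(by rewrite eq_sym)).
move: uN; rewrite inE => /andP[uU ev1u].
have uv2 : u != v2 by apply: contraNneq ne12 => <-.
have uv1 : u != v1 by apply: contraTneq ev1u => ->; rewrite eirr.
have uK : u \in Kc col (col v1) (col v2) v1.
  apply: Kc_closed (Kc_p _ _ _ _) _.
  by rewrite /Hk /= v1U uU eqxx cu eqxx orbT ev1u.
have H2 := kempe_path Hc v1N v2N ab uK uv1 uv2.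
have [w Hw wv1] : exists2 w, Hk col (col v1) (col v2) u w & w != v1.
  rewrite (cardsD1 v1) in H2.
  have : 0 < #|[set z | Hk col (col v1) (col v2) u z] :\ v1|.
    by move: H2; case: (v1 \in _); clear; lia.
  by case/card_gt0P => w; rewrite !inE => /andP[wv1 Hw]; exists w.
have wK : w \in Kc col (col v1) (col v2) v1 := Kc_closed uK Hw.
have wnD : w \notin Kc col (col v1) (col v3) v1.
  by apply/negP => wD; apply: (kempe_cross Hc v1N v2N v3N ab v3a v3b wK wD wv1).
pose col' := sw col (col v1) (col v3) (Kc col (col v1) (col v3) v1).
have Hc' : proper_col e U col' by apply: Kc_swap_proper.
have c'v1 : col' v1 = col v3 by rewrite /col' /sw Kc_p /swc eqxx.
have keepb : forall y, col y = col v2 -> col' y = col v2.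
  move=> y cy; rewrite /col' sw_out; first exact: cy.
  by rewrite cy negb_or [col v2 == col v1]eq_sym ab v3b.
have c'v2 := keepb v2 (erefl _).
have c'u := keepb u cu.
have [v3' v3'N cv3'] := F1 (col v1) Hc'.
have Hleaf : forall z, z \in Kc col (col v1) (col v2) v1 ->
    Hk col (col v1) (col v2) v1 z -> z = u.
  move=> z _ /and5P[_ zU _ cz ev1z].
  have czb : col z = col v2.
    move: cz => /orP[/eqP czv1|/eqP //].
    by have := Hc v1 z v1U zU ev1z; rewrite czv1 eqxx.
  have Ht := Ct3 (col v2) Hc v1N d3.
  have zA : z \in [set y in NS e U v1 | col y == col v2].
    by rewrite in_set /NS in_set zU ev1z czb eqxx.
  have uA : u \in [set y in NS e U v1 | col y == col v2].
    by rewrite in_set /NS in_set uU ev1u cu eqxx.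
  by move/card_le1_eqP: Ht => /(_ u z uA zA).
have sK : sepc (Hk col (col v1) (col v2)) (Kc col (col v1) (col v2) v1).
  exact: (closure_sepc (x := v1) (@Hk_sym col (col v1) (col v2))).
have sX := sepc_leaf (@Hk_sym col (col v1) (col v2)) sK (Kc_p _ _ _ _) Hleaf.
have keep : forall y, y \in Kc col (col v1) (col v2) v1 :\ v1 -> col' y = col y.
  move=> y; rewrite in_setD1 => /andP[yv1 yK].
  have /andP[_ /orP[/eqP cya|/eqP cyb]] := Kc_memU v1U (erefl _) yK.
    have ynD : y \notin Kc col (col v1) (col v3) v1.
      by apply/negP => yD; apply: (kempe_cross Hc v1N v2N v3N ab v3a v3b yK yD yv1).
    by rewrite /col' /sw (negbTE ynD).
  by rewrite cyb keepb.
have sX' : sepc (Hk col' (col v2) (col v1)) (Kc col (col v1) (col v2) v1 :\ v1).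
  apply: (sepc_mono sX) => y z yX zX.
  by rewrite /Hk /= (keep y yX) (keep z zX) [(col y == col v1) || _]orbC
     [(col z == col v1) || _]orbC.
have v2X : v2 \in Kc col (col v1) (col v2) v1 :\ v1.
  by rewrite in_setD1 eq_sym v12 (kempe_conn Hc v1N v2N ab).
have uX : u \in Kc col (col v1) (col v2) v1 :\ v1 by rewrite in_setD1 uv1 uK.
have uK1 : u \in Kc col' (col' v2) (col' v3') v2.
  rewrite c'v2 cv3' inE.
  by have := subsetP (sepc_closure sX' v2X) u uX; rewrite inE.
have uK2 : u \in Kc col' (col' v2) (col' v1) v2.
  have v1K : v1 \in Kc col' (col' v2) (col' v1) v2.
    by apply: kempe_conn => //; rewrite c'v2 c'v1.
  apply: Kc_closed v1K _.
  by rewrite /Hk /= v1U uU eqxx orbT c'u c'v2 eqxx ev1u.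
apply: (kempe_cross Hc' v2N v3'N v1N _ _ _ uK1 uK2 uv2).
- by rewrite c'v2 cv3' eq_sym.
- by rewrite c'v2 c'v1.
- by rewrite cv3' c'v1.
Qed.

End Kempe.

Lemma K_main (T : finType) (e : rel T) (esym : symmetric e) (eirr : irreflexive e)
  (S : {set T}) d v v1 v2 : sepc e S -> (forall x, x \in S -> #|NS e S x| = d) -> (2 < d)%N ->
  v \in S -> v1 \in NS e S v -> v2 \in NS e S v -> v1 != v2 -> ~~ e v1 v2 ->
  #|S| <= d * alphaS e S.
Proof.
move=> Sc Sreg d3 vS v1N v2N v12 ne12.
rewrite leqNgt; apply/negP => tight.
have d0 : 0 < d by apply: leq_trans d3.
have Hd : forall x, x \in S :\ v -> #|NS e (S :\ v) x| <= d.
  move=> x; rewrite in_setD1 => /andP[_ xS]; rewrite -(Sreg x xS).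
  by apply: subset_leq_card; apply: NS_sub; apply: subsetDl.
have Hlow := low_del Sc (fun x xS => eq_leq (Sreg x xS)) vS.
have [col Hc] := colorA esym eirr d0 Hd Hlow.
exact: (kempe_final esym eirr Sreg vS tight d3 Hc v1N v2N v12 ne12).
Qed.

Section Main.
Variable T : finType.
Variable e : rel T.
Hypothesis esym : symmetric e.
Hypothesis eirr : irreflexive e.

Definition Nc (S : {set T}) x := x |: NS e S x.
Definition isclq (S : {set T}) x := [forall y in Nc S x, Nc S y == Nc S x].

Lemma notin_NS (S : {set T}) x : x \notin NS e S x.
Proof. by rewrite inE eirr andbF. Qed.

Lemma card_Nc (S : {set T}) x : #|Nc S x| = #|NS e S x|.+1.
Proof. by rewrite /Nc cardsU1 notin_NS. Qed.

Lemma Nc_sub (S : {set T}) x : x \in S -> Nc S x \subset S.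
Proof.
move=> xS; apply/subsetP => y; rewrite !inE => /orP[/eqP->//|/andP[]//].
Qed.

Lemma clq_mem (S : {set T}) x y : isclq S x -> y \in Nc S x -> isclq S y /\ Nc S y = Nc S x.
Proof.
move=> /forall_inP Hx yN; have /eqP Ey := Hx y yN.
split => //; apply/forall_inP => z; rewrite Ey => zN.
by rewrite (eqP (Hx z zN)).
Qed.

Lemma closed_all (S A : {set T}) : sepc e S -> A \subset S -> A != set0 ->
  (forall p q, p \in A -> q \in S -> e p q -> q \in A) -> A = S.
Proof.
move=> Sc sA A0 Acl; apply/eqP; apply/negPn/negP => AS.
have [p [q [pA /setDP[qS qnA] epq]]] := Sc A sA A0 AS.
by rewrite (Acl p q pA qS epq) in qnA.
Qed.

Lemma clq_all (S : {set T}) x : sepc e S -> x \in S -> isclq S x -> Nc S x = S.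
Proof.
move=> Sc xS Hx; apply: closed_all => //; first exact: Nc_sub.
  by apply/set0Pn; exists x; rewrite !inE eqxx.
move=> p q pN qS epq; have [_ Ep] := clq_mem Hx pN.
by rewrite -Ep !inE qS epq orbT.
Qed.

Lemma split_or_sepc (S : {set T}) : (exists A : {set T}, [/\ A \subset S, A != set0, A != S &
  forall p q, p \in A -> q \in S -> e p q -> q \in A]) \/ sepc e S.
Proof.
case: (boolP [exists A : {set T}, [&& A \subset S, A != set0, A != S &
    [forall p in A, forall q in S, e p q ==> (q \in A)]]]).
  move=> /existsP[A /and4P[h1 h2 h3 /forall_inP h4]]; left; exists A; split => //.
  by move=> p q pA qS epq; move/forall_inP: (h4 p pA) => /(_ q qS); rewrite epq.
rewrite negb_exists => /forallP H; right => A sA A0 AS.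
move: (H A); rewrite sA A0 AS /= negb_forall_in => /existsP[p /andP[pA]].
rewrite negb_forall_in => /existsP[q /andP[qS]]; rewrite negb_imply => /andP[epq qnA].
by exists p, q; split => //; rewrite inE qnA qS.
Qed.

Lemma nonclique_pair (S : {set T}) : sepc e S -> S != set0 -> (forall x, x \in S -> ~~ isclq S x) ->
  exists v v1 v2, [/\ v \in S, v1 \in NS e S v, v2 \in NS e S v, v1 != v2 & ~~ e v1 v2].
Proof.
move=> Sc S0 Hn.
case: (boolP [exists v in S, exists v1 in NS e S v, exists v2 in NS e S v,
    (v1 != v2) && ~~ e v1 v2]).
  move=> /exists_inP[v vS /exists_inP[v1 v1N /exists_inP[v2 v2N /andP[h1 h2]]]].
  by exists v, v1, v2.
rewrite negb_exists_in => /forall_inP H.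
have H' : forall w w1 w2, w \in S -> w1 \in NS e S w -> w2 \in NS e S w -> w1 != w2 -> e w1 w2.
  move=> w w1 w2 wS w1N w2N w12.
  move: (H w wS); rewrite negb_exists_in => /forall_inP/(_ w1 w1N).
  rewrite negb_exists_in => /forall_inP/(_ w2 w2N).
  by rewrite negb_and w12 negbK.
have NcS : forall x, x \in S -> Nc S x = S.
  move=> x xS; apply: closed_all => //; first exact: Nc_sub.
    by apply/set0Pn; exists x; rewrite !inE eqxx.
  move=> p q; rewrite !inE => /orP[/eqP->|/andP[pS exp]] qS epq.
    by rewrite qS epq orbT.
  case: (eqVneq q x) => [//|qx].
  rewrite qS /=; apply: (H' p) => //; first by rewrite !inE xS esym.
    by rewrite !inE qS.
  by rewrite eq_sym.
have [x xS] := set0Pn _ S0.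
exfalso; move/negP: (Hn x xS); apply; apply/forall_inP => y yN.
have yS : y \in S by apply: (subsetP (Nc_sub xS)).
by rewrite (NcS x xS) (NcS y yS).
Qed.

Lemma alphaS_split (S A : {set T}) : A \subset S -> (forall p q, p \in A -> q \in S :\: A -> ~~ e p q) ->
  alphaS e A + alphaS e (S :\: A) <= alphaS e S.
Proof.
move=> sA Hn.
have [IA [h1 h2 h3]] := alphaS_ex e A.
have [IB [h4 h5 h6]] := alphaS_ex e (S :\: A).
have dis : [disjoint IA & IB].
  apply/pred0P => x /=; apply/negP => /andP[xA xB].
  by move: (subsetP h4 x xB) (subsetP h1 x xA); rewrite inE => /andP[/negP].
rewrite -h3 -h6 -cardsUI (disjoint_setI0 dis) cards0 addn0.
apply: alphaS_ge.
  by rewrite subUset (subset_trans h1 sA) (subset_trans h4 (subsetDl _ _)).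
apply/indepP => x y; rewrite !inE => /orP[xA|xB] /orP[yA|yB].
- exact: (indepP _ _ h2).
- exact: Hn (subsetP h1 x xA) (subsetP h4 y yB).
- by rewrite esym; exact: Hn (subsetP h1 y yA) (subsetP h4 x xB).
- exact: (indepP _ _ h5).
Qed.

Lemma alphaS_add1 (S : {set T}) v : v \in S -> (alphaS e (S :\: Nc S v)).+1 <= alphaS e S.
Proof.
move=> vS.
have [I [h1 h2 h3]] := alphaS_ex e (S :\: Nc S v).
have vI : v \notin I.
  by apply/negP => /(subsetP h1); rewrite !inE eqxx.
suff H : #|v |: I| <= alphaS e S by rewrite cardsU1 vI add1n h3 in H.
apply: alphaS_ge.
  by rewrite subUset sub1set vS (subset_trans h1 (subsetDl _ _)).
apply/indepP => x y; rewrite !inE => /orP[/eqP->|xI] /orP[/eqP->|yI].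
- by rewrite eirr.
- move: (subsetP h1 y yI); rewrite !inE negb_or => /andP[/andP[_ H] yS].
  by move: H; rewrite yS.
- move: (subsetP h1 x xI); rewrite !inE negb_or => /andP[/andP[_ H] xS].
  by move: H; rewrite xS esym.
- exact: (indepP _ _ h2).
Qed.

Lemma alphaS_pos (S : {set T}) : S != set0 -> 0 < alphaS e S.
Proof.
case/set0Pn => x xS; apply: leq_trans (alphaS_ge (I := [set x]) _ _).
  by rewrite cards1.
  by rewrite sub1set.
by apply/indepP => a b; rewrite !inE => /eqP-> /eqP->; rewrite eirr.
Qed.


Lemma Nc_eq_clq (S : {set T}) x : x \in S -> #|NS e S x| = 0%N -> isclq S x.
Proof.
move=> xS H; have E : NS e S x = set0 by apply/eqP; rewrite -cards_eq0 H.
apply/forall_inP => y; rewrite /Nc E setU0 inE => /eqP->; by rewrite /Nc E setU0.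
Qed.

Local Open Scope ring_scope.
Variable R : realFieldType.
Variable D : nat.
Variable c : nat -> R.
Hypothesis D3 : (2 < D)%N.
Hypothesis cD : c D = (D%:R)^-1.
Hypothesis crec : forall i : nat, (0 < i <= D - 1)%N -> i%:R * c i + c i.+1 = 1.
Hypothesis degD : forall x, (#|NS e setT x| <= D)%N.

Local Notation w := (wt c).

Lemma degS (S : {set T}) x : (#|NS e S x| <= D)%N.
Proof. by apply: leq_trans (degD x); apply: subset_leq_card; apply: NS_sub; apply: subsetT. Qed.

Definition psi (S : {set T}) x : R :=
  if isclq S x then ((#|NS e S x|).+1%:R)^-1 else w #|NS e S x|.

Lemma psi_sub (S A : {set T}) x : A \subset S ->
  (forall p q, p \in A -> q \in S -> e p q -> q \in A) -> x \in A -> psi S x = psi A x.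
Proof.
move=> sA Acl xA.
have NSeq : forall y, y \in A -> NS e S y = NS e A y.
  move=> y yA; apply/setP => z; rewrite !inE; case: (boolP (e y z)) => eyz; rewrite ?andbF ?andbT //.
  apply/idP/idP => [zS|zA]; [exact: Acl yA zS eyz | exact: (subsetP sA z zA)].
have Nceq : forall y, y \in A -> Nc S y = Nc A y by move=> y yA; rewrite /Nc NSeq.
rewrite /psi /isclq NSeq // Nceq //.
have -> : [forall y in Nc A x, Nc S y == Nc A x] = [forall y in Nc A x, Nc A y == Nc A x].
  apply: eq_forallb_in => y yN; rewrite Nceq //.
  exact: (subsetP (Nc_sub xA)).
by [].
Qed.

Lemma part1 (S : {set T}) v u0 : v \in S -> (forall y, y \in S -> #|NS e S v| <= #|NS e S y|)%N ->
  u0 \in NS e S v -> (#|NS e S v| < #|NS e S u0|)%N ->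
  w #|NS e S v| + \sum_(u in NS e S v) w #|NS e S u| <= 1.
Proof.
move=> vS Hmin u0N Hu0.
set dl := #|NS e S v|.
have u0S : u0 \in S by move: u0N; rewrite inE => /andP[].
rewrite (big_setD1 u0 u0N) /=.
have H1 : w #|NS e S u0| <= w dl.+1 by apply: (wt_mono D3 cD crec) => //; apply: degS.
have H2 : \sum_(u in NS e S v :\ u0) w #|NS e S u| <= \sum_(u in NS e S v :\ u0) w dl.
  apply: ler_sum => u; rewrite !inE => /andP[_ /andP[uS _]].
  by apply: (wt_mono D3 cD crec) => //; [apply: Hmin | apply: degS].
rewrite sumr_const in H2.
have Hc : #|NS e S v :\ u0| = dl.-1 by rewrite /dl (cardsD1 u0 (NS e S v)) u0N.
rewrite Hc in H2.
have dl1 : (0 < dl)%N by rewrite /dl card_gt0; apply/set0Pn; exists u0.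
have HD : (0 < dl.+1 <= D)%N by rewrite /= (leq_trans Hu0) ?degS.
have Hcl := wt_clique D3 cD crec HD; rewrite /= in Hcl.
have E : dl%:R = dl.-1%:R + 1 :> R by rewrite natr1 prednK.
move: Hcl; rewrite E mulrDl mul1r -mulr_natl => Hcl.
apply: le_trans Hcl.
rewrite -mulr_natl in H2; rewrite mulr1.
move: H1 H2; set a := w #|NS e S u0|; set b := \sum_(_ in _) _; set x := w dl; set y := w dl.+1.
move=> H1 H2; lra.
Qed.


Lemma part2 (S S' : {set T}) : sepc e S -> S' \subset S -> S' != S ->
  \sum_(y in S') w #|NS e S y| <= \sum_(y in S') psi S' y.
Proof.
move=> Sc sS' S'S.
set Q := [set y in S' | isclq S' y].
have sQ : Q \subset S' by apply/subsetP => y; rewrite inE => /andP[].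
rewrite (big_setID Q) [X in _ <= X](big_setID Q) /= (setIidPr sQ).
apply: lerD; last first.
  apply: ler_sum => y; rewrite !inE negb_and => /andP[/orP[/negP//|nc] yS'].
  rewrite /psi (negbTE nc); apply: (wt_mono D3 cD crec); last exact: degS.
  by apply: subset_leq_card; apply: NS_sub.
have clqQ : forall y, y \in Q -> isclq S' y by move=> y; rewrite inE => /andP[].
have SQ : forall y, y \in Q -> y \in S' by move=> y; rewrite inE => /andP[].
have KQ : forall y, y \in Q -> Nc S' y \subset Q.
  move=> y yQ; apply/subsetP => z zN; rewrite inE.
  rewrite (subsetP (Nc_sub (SQ y yQ)) z zN) /=.
  by have [] := clq_mem (clqQ y yQ) zN.
have Keq : forall y z, y \in Q -> z \in Nc S' y -> Nc S' z = Nc S' y.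
  by move=> y z yQ zN; have [] := clq_mem (clqQ y yQ) zN.
have yNc : forall y, y \in Nc S' y by move=> y; rewrite !inE eqxx.
have Kmem : forall y z, y \in Q -> z \in Q -> (z \in Nc S' y) = (y \in Nc S' z).
  move=> y z yQ zQ; rewrite !inE (SQ y yQ) (SQ z zQ) /= esym.
  by case: (eqVneq z y) => [->|zy] //=; rewrite eq_sym (negbTE zy).
have Kcl : forall y, y \in Q -> \sum_(z in Nc S' y) w #|NS e S z| <= 1.
  move=> y yQ.
  have sK : Nc S' y \subset S by apply: subset_trans (Nc_sub (SQ y yQ)) sS'.
  have K0 : Nc S' y != set0 by apply/set0Pn; exists y.
  have KS : Nc S' y != S.
    apply: contra S'S => /eqP KS; rewrite eqEsubset sS' /= -KS.
    exact: Nc_sub (SQ y yQ).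
  have [p [q [pK /setDP[qS qnK] epq]]] := Sc _ sK K0 KS.
  have Kp := Keq y p yQ pK.
  have pS' : p \in S' by apply: (subsetP (Nc_sub (SQ y yQ))).
  have cK : #|Nc S' y| = #|NS e S' p|.+1 by rewrite -Kp card_Nc.
  have degp : (#|Nc S' y| <= #|NS e S p|)%N.
    have qn : q \notin NS e S' p.
      by apply: contra qnK => qN; rewrite -Kp /Nc in_setU1 qN orbT.
    rewrite cK; have := cardsU1 q (NS e S' p); rewrite qn add1n => <-.
    apply: subset_leq_card; apply/subsetP => z.
    rewrite !inE => /orP[/eqP->|/andP[zS' epz]]; first by rewrite qS epq.
    by rewrite (subsetP sS' z zS') epz.
  set m := #|Nc S' y| in cK degp *.
  rewrite (big_setD1 p pK) /=.
  have H1 : w #|NS e S p| <= w m by apply: (wt_mono D3 cD crec) => //; apply: degS.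
  have H2 : \sum_(z in Nc S' y :\ p) w #|NS e S z| <= \sum_(z in Nc S' y :\ p) w m.-1.
    apply: ler_sum => z; rewrite in_setD1 => /andP[_ zK].
    apply: (wt_mono D3 cD crec); last exact: degS.
    have zS' : z \in S' by apply: (subsetP (Nc_sub (SQ y yQ))).
    rewrite /m -(Keq y z yQ zK) card_Nc /=.
    by apply: subset_leq_card; apply: NS_sub.
  rewrite sumr_const -mulr_natl in H2.
  have Hc : #|Nc S' y :\ p| = m.-1 by rewrite /m (cardsD1 p (Nc S' y)) pK.
  rewrite Hc in H2.
  have HD : (0 < m <= D)%N by rewrite cK /= (leq_trans _ (degS S p)) // -cK.
  have Hcl := wt_clique D3 cD crec HD.
  move: H1 H2 Hcl; set a := w #|NS e S p|; set b := \sum_(_ in _) _.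
  set x := _ * w m.-1; set z := w m; move=> H1 H2 Hcl; lra.
have ident : \sum_(y in Q) w #|NS e S y| =
    \sum_(y in Q) (#|Nc S' y|%:R)^-1 * \sum_(z in Nc S' y) w #|NS e S z|.
  symmetry.
  transitivity (\sum_(y in Q) \sum_(z in Q | z \in Nc S' y)
      (#|Nc S' z|%:R)^-1 * w #|NS e S z|).
    apply: eq_bigr => y yQ; rewrite mulr_sumr.
    rewrite [RHS](eq_bigl (fun z => z \in Nc S' y)); last first.
      move=> z; apply/andP/idP => [[]//|zN]; split => //.
      exact: (subsetP (KQ y yQ) z zN).
    by apply: eq_bigr => z zN; rewrite (Keq y z yQ zN).
  rewrite (exchange_big_dep (fun z => z \in Q)) /=; last by move=> y z _ /andP[].
  apply: eq_bigr => z zQ.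
  rewrite [LHS](eq_bigl (fun y => y \in Nc S' z)); last first.
    move=> y; rewrite zQ /=; case yQ: (y \in Q) => /=; first by rewrite Kmem.
    symmetry; apply/negbTE/negP => yN; by rewrite (subsetP (KQ z zQ) y yN) in yQ.
  rewrite sumr_const; set n := #|Nc S' z|; set F := w _.
  rewrite -[(_ * F) *+ n]mulr_natr mulrAC mulVf ?mul1r //.
  by rewrite pnatr_eq0 /n card_Nc.
rewrite ident; apply: ler_sum => y yQ.
rewrite /psi (clqQ y yQ) -card_Nc -[X in _ <= X]mulr1.
by apply: ler_wpM2l; [rewrite invr_ge0 ler0n | exact: Kcl].
Qed.


Lemma reg_case (S : {set T}) dl : sepc e S -> S != set0 ->
  (forall x, x \in S -> #|NS e S x| = dl) -> (forall x, x \in S -> ~~ isclq S x) ->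
  #|S|%:R * w dl <= (alphaS e S)%:R.
Proof.
move=> Sc S0 Sreg Hn.
have [v vS] := set0Pn _ S0.
have dl0 : (0 < dl)%N.
  rewrite lt0n; apply/negP => /eqP d0.
  by move: (Hn v vS); rewrite Nc_eq_clq // Sreg.
have wdl : w dl = c dl by rewrite /wt eqn0Ngt dl0.
have dlD : (dl <= D)%N by rewrite -(Sreg v vS) degS.
have [dlD'|dlD'|dlD'] := ltngtP dl D.
- have Hd : forall x, x \in S :\ v -> (#|NS e (S :\ v) x| <= dl)%N.
    move=> x; rewrite in_setD1 => /andP[_ xS]; rewrite -(Sreg x xS).
    by apply: subset_leq_card; apply: NS_sub; apply: subsetDl.
  have Hlow := low_del Sc (fun x xS => eq_leq (Sreg x xS)) vS.
  have [col Hc] := colorA esym eirr dl0 Hd Hlow.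
  have Hb := color_bound Hc (subsetDl S [set v]).
  have HS : #|S| = (#|S :\ v|).+1 by rewrite (cardsD1 v S) vS.
  have big : (dl.+2 <= #|S|)%N.
    rewrite ltnNge; apply/negP => Hs.
    have NcS : forall y, y \in S -> Nc S y = S.
      move=> y yS; apply/eqP; rewrite eqEcard Nc_sub // card_Nc Sreg //.
    move/negP: (Hn v vS); apply; apply/forall_inP => y yN.
    have yS : y \in S by apply: (subsetP (Nc_sub vS)).
    by rewrite !NcS.
  have a2 : (1 < alphaS e S)%N.
    rewrite ltnNge; apply/negP => a1.
    have := leq_mul (leqnn dl) a1; rewrite muln1 => H.
    move: Hb HS big H; clear; lia.
  rewrite wdl; apply: (c_reg2 D3 cD crec dl0 _ a2).
    by move: dlD'; clear; lia.
  by move: Hb HS; clear; lia.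
- by move: dlD dlD'; clear; lia.
- subst dl.
  have Hn2 : forall x, x \in S -> ~~ isclq S x := Hn.
  have [v' [v1 [v2 [v'S v1N v2N v12 ne12]]]] := nonclique_pair Sc S0 Hn2.
  have HK := K_main esym eirr Sc Sreg D3 v'S v1N v2N v12 ne12.
  rewrite wdl cD ler_pdivrMr; last by rewrite ltr0n; apply: leq_trans D3.
  by rewrite -natrM ler_nat mulnC.
Qed.

Lemma claim (S : {set T}) : \sum_(x in S) psi S x <= (alphaS e S)%:R.
Proof.
have [n Hn] := ubnP #|S|; elim: n S Hn => // n IH S Hn.
case: (split_or_sepc S) => [[A [sA A0 AS Acl]]|Sc].
- set B := S :\: A.
  have Hn' : (#|S| <= n)%N by rewrite -ltnS.
  have sB : B \subset S := subsetDl S A.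
  have Bcl : forall p q, p \in B -> q \in S -> e p q -> q \in B.
    move=> p q; rewrite !inE => /andP[pnA pS] qS epq; rewrite qS andbT.
    by apply: contra pnA => qA; apply: Acl qA pS _; rewrite esym.
  have HA : (#|A| < n)%N.
    apply: (leq_trans _ Hn'); apply: proper_card; by rewrite properEneq AS sA.
  have HB : (#|B| < n)%N.
    apply: (leq_trans _ Hn'); rewrite /B (cardsDS sA).
    have := card_gt0 A; rewrite A0 => /idP HA0.
    have := subset_leq_card sA; move: HA0; clear; lia.
  rewrite (big_setID A) /= (setIidPr sA).
  have E1 : \sum_(x in A) psi S x = \sum_(x in A) psi A x.
    by apply: eq_bigr => x xA; apply: psi_sub.
  have E2 : \sum_(x in S :\: A) psi S x = \sum_(x in B) psi B x.
    by apply: eq_bigr => x xB; apply: psi_sub.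
  rewrite E1 E2.
  apply: le_trans (lerD (IH A HA) (IH B HB)) _.
  rewrite -natrD ler_nat; apply: alphaS_split => // p q pA qB; apply/negP => epq.
  by move: qB; rewrite inE => /andP[/negP qnA qS]; apply: qnA; apply: Acl pA qS epq.
- case: (eqVneq S set0) => [->|S0]; first by rewrite big_set0 ler0n.
  case: (boolP [exists x in S, isclq S x]) => [/exists_inP[x xS Hx]|Hnc].
  + have NcS := clq_all Sc xS Hx.
    have Hy : forall y, y \in S -> psi S y = (#|S|%:R)^-1.
      move=> y yS; have yN : y \in Nc S x by rewrite NcS.
      have [Hy Ey] := clq_mem Hx yN.
      by rewrite /psi Hy -card_Nc Ey NcS.
    rewrite (eq_bigr _ Hy) sumr_const; set k := #|S|.
    rewrite -[(_^-1) *+ k]mulr_natr mulVf; last first.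
      by rewrite pnatr_eq0 -lt0n /k card_gt0.
    by rewrite ler1n; apply: alphaS_pos.
  + have Hn' : forall x, x \in S -> ~~ isclq S x.
      by move=> x xS; apply: contra Hnc => H; apply/exists_inP; exists x.
    have psiw : forall x, x \in S -> psi S x = w #|NS e S x|.
      by move=> x xS; rewrite /psi (negbTE (Hn' x xS)).
    rewrite (eq_bigr _ psiw).
    have [x0 x0S] := set0Pn _ S0.
    case: (arg_minnP (fun x => #|NS e S x|) x0S) => v0 v0S Hmin.
    have v0S' : v0 \in S := v0S.
    case: (boolP [exists v in S, (#|NS e S v| == #|NS e S v0|) &&
        [exists u in NS e S v, (#|NS e S v0| < #|NS e S u|)%N]]).
    * move=> /exists_inP[v vS /andP[/eqP dv /exists_inP[u0 u0N du0]]].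
      have Hmin' : forall y, y \in S -> (#|NS e S v| <= #|NS e S y|)%N.
        by move=> y yS; rewrite dv Hmin.
      have sNc := Nc_sub vS.
      rewrite (big_setID (Nc S v)) /= (setIidPr sNc) (big_setU1 _ (notin_NS S v)) /=.
      have P1 := part1 vS Hmin' u0N (ltac:(by rewrite dv)).
      have S'S : S :\: Nc S v != S.
        by apply/eqP => E; move: vS; rewrite -E !inE eqxx.
      have P2 := part2 Sc (subsetDl S (Nc S v)) S'S.
      have HS' : (#|S :\: Nc S v| < n)%N.
        have Hn2 : (#|S| <= n)%N by rewrite -ltnS.
        apply: (leq_trans _ Hn2); apply: proper_card; rewrite properEneq S'S.
        exact: subsetDl.
      have IH' := IH _ HS'.
      have A1 := alphaS_add1 vS.
      apply: le_trans (lerD P1 (le_trans P2 IH')) _.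
      by rewrite addrC natr1 ler_nat.
    * rewrite negb_exists_in => /forall_inP Hno.
      set dl := #|NS e S v0|.
      have Sreg : forall y, y \in S -> #|NS e S y| = dl.
        move=> y yS.
        have Aeq : [set y in S | #|NS e S y| == dl] = S.
          apply: closed_all => //.
          - by apply/subsetP => z; rewrite inE => /andP[].
          - by apply/set0Pn; exists v0; rewrite inE v0S' eqxx.
          move=> p q; rewrite !inE => /andP[pS /eqP dp] qS epq; rewrite qS /=.
          have := Hno p pS; rewrite dp eqxx /= negb_exists_in => /forall_inP.
          move=> /(_ q (ltac:(by rewrite inE qS epq))); rewrite -leqNgt => Hq.
          by rewrite eqn_leq Hq (Hmin q qS).
        by move: yS; rewrite -{1}Aeq inE => /andP[_ /eqP].
      rewrite (eq_bigr (fun _ => w dl)); last by move=> y yS; rewrite Sreg.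
      rewrite sumr_const -[w dl *+ #|S|]mulr_natl.
      exact: (reg_case Sc S0 Sreg Hn').
Qed.

End Main.

Local Open Scope ring_scope.
Lemma sum_ind (R : realFieldType) (a : R) (k m n : nat) : 0 <= a ->
  \sum_(m <= i < n) (if k == i then a else 0) <= a.
Proof.
move=> a0; elim: n => [|n IH]; first by rewrite big_geq.
case: (leqP m n)%N => mn; last by rewrite big_geq.
rewrite big_nat_recr //=.
case: (eqVneq k n) => [kn|kn]; last by rewrite addr0.
rewrite big_nat_cond big1 ?add0r // => i /andP[/andP[_ ilt] _].
by rewrite kn; case: (eqVneq n i) => // ni; move: ilt; rewrite ni ltnn.
Qed.


Theorem theorem2 (R : realFieldType) (T : finType) (e : rel T) (Delta : nat)
    (c : nat -> R) :
  (3 <= Delta)%N ->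
  simple_graph e ->
  connected_graph e ->
  max_degree e = Delta ->
  ~ is_complete_graph e Delta.+1 ->
  c Delta = (Delta%:R)^-1 ->
  (forall i : nat, (1 <= i <= Delta - 1)%N -> i%:R * c i + c i.+1 = 1) ->
  \sum_(1 <= i < Delta.+1) c i * (#|Vdeg e i|)%:R <= (alpha e)%:R.
Proof.
move=> D3 [esym eirr] conn maxD notK cD crec.
have degE : forall x, #|NS e setT x| = deg e x.
  by move=> x; apply: eq_card => y; rewrite !inE.
have degD : forall x, (#|NS e setT x| <= Delta)%N.
  move=> x; rewrite degE -maxD.
  exact: (@leq_bigmax _ (fun x => deg e x) x).
have Sc : sepc e setT.
  move=> A _ A0 AT.
  have [p pA] := set0Pn _ A0.
  case: (boolP [exists q, q \notin A]) => [/existsP[q qnA]|].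
    have [p' [q' [h1 h2 h3 _]]] := connect_cross (conn p q) pA qnA.
    by exists p', q'; split => //; rewrite inE h2 in_setT.
  rewrite negb_exists => /forallP H; exfalso; move/negP: AT; apply.
  by apply/eqP/setP => x; rewrite in_setT; move: (H x); rewrite negbK.
have Cl := claim esym eirr D3 cD crec degD setT.
have alphaE : alphaS e setT = alpha e.
  by rewrite /alphaS /alpha; apply: eq_bigl => I; rewrite subsetT.
have Hn : forall x, ~~ isclq e setT x.
  move=> x; apply/negP => Hx.
  have NcT := clq_all Sc (in_setT x) Hx.
  have NcA : forall a, Nc e setT a = setT.
    move=> a; have aN : a \in Nc e setT x by rewrite NcT in_setT.
    by have [_ ->] := clq_mem Hx aN.
  have dA : forall a, deg e a = #|T|.-1.
    by move=> a; rewrite -degE; have := card_Nc eirr [set: T] a; rewrite NcA cardsT => ->.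
  have T0 : (0 < #|T|)%N by apply/card_gt0P; exists x.
  have [i0 Hi0] := bigop.eq_bigmax (fun a => deg e a) T0.
  apply: notK; split.
    move: maxD; rewrite /max_degree Hi0 dA => <-.
    by rewrite prednK.
  move=> a b ab.
  have : b \in Nc e setT a by rewrite NcA.
  by rewrite /Nc in_setU1 eq_sym (negbTE ab) /= inE in_setT.
have psiE : forall x, psi e c setT x = wt c (deg e x).
  by move=> x; rewrite /psi (negbTE (Hn x)) degE.
rewrite -alphaE; apply: le_trans Cl.
have E : \sum_(1 <= i < Delta.+1) c i * (#|Vdeg e i|)%:R =
    \sum_(1 <= i < Delta.+1) \sum_(x : T) (if deg e x == i then wt c (deg e x) else 0).
  apply: eq_big_nat => i /andP[i1 _].
  rewrite -big_mkcond /=.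
  rewrite (eq_bigr (fun _ => c i)); last first.
    by move=> x /eqP ->; rewrite /wt eqn0Ngt i1.
  rewrite (eq_bigl (fun x => x \in Vdeg e i)); last by move=> x; rewrite inE.
  by rewrite sumr_const mulr_natr.
rewrite E exchange_big /=.
rewrite (eq_bigl (fun x => x \in setT)) /=; last by move=> x; rewrite in_setT.
apply: ler_sum => x _; rewrite psiE.
apply: sum_ind; apply: (wt_ge0 D3 cD crec); rewrite -degE; exact: degD.
Qed.
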